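(* Let $n,d$ be integers with $3\le d\le n-2$. Define for $x\ge d$ $$\phi(x)=\frac{2^{-(n-d+1)}\,n!}{(d-3)!\,(n-d+1)!}\int_0^d z^{d-3}(d-z)(x-z)^{n-d+1}\,dz,\qquad \Phi(x)=\frac{2^{-(n-d+1)}\,n!}{(d-3)!\,(n-d+2)!}\int_0^d z^{d-3}(d-z)(x-z)^{n-d+2}\,dz.$$ Then $\Phi(2n-d+2)>2\phi(2n-d+2)$.
   Context: Here $\Phi(x)=\int_0^x\phi(t)\,dt$ where $\phi$ on $[0,d]$ is $2^{-(n-d+1)}x^{n-1}(dn-(d-2)x)$; the displayed formulas are the values for $x\ge d$, and $2n-d+2>d$. *)

(* Defs.v *)
From Stdlib Require Import Reals Lra Lia Factorial.
From Coquelicot Require Import Coquelicot.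
Open Scope R_scope.

(* phi(x) = 2^{-(n-d+1)} n! / ((d-3)! (n-d+1)!) * \int_0^d z^{d-3} (d-z) (x-z)^{n-d+1} dz
   (formula valid for x >= d). Natural subtractions are exact under 3 <= d <= n-2. *)
Definition phi (n d : nat) (x : R) : R :=
  / 2 ^ (n - d + 1) * INR (fact n) / (INR (fact (d - 3)) * INR (fact (n - d + 1)))
  * RInt (fun z => z ^ (d - 3) * (INR d - z) * (x - z) ^ (n - d + 1)) 0 (INR d).

Definition Phi (n d : nat) (x : R) : R :=
  / 2 ^ (n - d + 1) * INR (fact n) / (INR (fact (d - 3)) * INR (fact (n - d + 2)))
  * RInt (fun z => z ^ (d - 3) * (INR d - z) * (x - z) ^ (n - d + 2)) 0 (INR d).

(* Main.v *)
Require Import Defs.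
From Stdlib Require Import Reals Factorial Lra Lia.
From Coquelicot Require Import Coquelicot.
Open Scope R_scope.

Lemma cont_poly (f : R -> R) z : (forall y, ex_derive f y) -> continuous f z.
Proof. intros H; apply (ex_derive_continuous f); apply H. Qed.

Lemma int_zero (k : nat) (a : R) : a = INR k + 3 ->
  RInt (fun z => z ^ k * (a - z) * (a - 2 - z)) 0 a = 0.
Proof.
  intros Ha.
  pose (F := fun z => a * (a - 2) * z ^ (S k) / (INR k + 1)
                    - (2 * a - 2) * z ^ (S (S k)) / (INR k + 2)
                    + z ^ (S (S (S k))) / (INR k + 3)).
  assert (Hpos : 0 <= INR k) by apply pos_INR.
  assert (H : is_RInt (fun z => z ^ k * (a - z) * (a - 2 - z)) 0 a (minus (F a) (F 0))).
  { apply (is_RInt_derive F).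
    - intros z _. unfold F. auto_derive; [repeat split; lra|].
      change (match k with 0%nat => 1 | S _ => INR k + 1 end) with (INR (S k)); rewrite S_INR. simpl pow. rewrite Ha. field. lra.
    - intros z _. apply cont_poly. intros y. auto_derive. auto. }
  rewrite (is_RInt_unique _ _ _ _ H).
  unfold F, minus, plus, opp; simpl.
  rewrite Ha. field. lra.
Qed.

Lemma pow_lt_strict (p q : R) (m : nat) : 0 <= p -> p < q -> (1 <= m)%nat -> p ^ m < q ^ m.
Proof.
  intros H0 H1 Hm. destruct m as [|m']; [lia|]. simpl.
  assert (p ^ m' <= q ^ m') by (apply pow_incr; lra).
  assert (0 < q ^ m') by (apply pow_lt; lra).
  nra.
Qed.

Lemma main_ineq (k m : nat) (a x : R) : a = INR k + 3 -> x = a + 2 * INR m ->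
  (1 <= m)%nat ->
  RInt (fun z => z ^ k * (a - z) * (x - z) ^ S m) 0 a
  - 2 * (INR m + 1) * RInt (fun z => z ^ k * (a - z) * (x - z) ^ m) 0 a > 0.
Proof.
  intros Ha Hx Hm.
  assert (Hk : 0 <= INR k) by apply pos_INR.
  assert (Hm1 : 1 <= INR m) by (apply (le_INR 1); lia).
  pose (A := fun z => z ^ k * (a - z) * (a - 2 - z) * (x - z) ^ m).
  set (c := (x - a + 2) ^ m).
  pose (B := fun z => c * (z ^ k * (a - z) * (a - 2 - z))).
  assert (contA : forall z, continuous A z).
  { intros z; apply cont_poly; intros y; unfold A; auto_derive; auto. }
  assert (contB : forall z, continuous B z).
  { intros z; apply cont_poly; intros y; unfold B; auto_derive; auto. }
  assert (E : RInt (fun z => z ^ k * (a - z) * (x - z) ^ S m) 0 a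
     - 2 * (INR m + 1) * RInt (fun z => z ^ k * (a - z) * (x - z) ^ m) 0 a
     = RInt A 0 a).
  { rewrite <- (RInt_scal (V:=R_CompleteNormedModule)).
    2: { apply ex_RInt_continuous; intros; apply cont_poly; intros; auto_derive; auto. }
    rewrite <- (RInt_minus (V:=R_CompleteNormedModule)).
    2,3: apply ex_RInt_continuous; intros; apply cont_poly; intros; unfold scal; simpl; unfold mult; simpl; auto_derive; auto.
    apply RInt_ext. intros z _. unfold A, minus, plus, opp, scal; simpl.
    unfold mult; simpl. rewrite Hx. ring. }
  rewrite E.
  assert (EB : RInt B 0 a = 0).
  { unfold B. rewrite (RInt_scal (V:=R_CompleteNormedModule)).
    - rewrite int_zero; auto. unfold scal; simpl; unfold mult; simpl; ring.
    - apply ex_RInt_continuous; intros; apply cont_poly; intros; auto_derive; auto. }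
  cut (RInt B 0 a < RInt A 0 a); [lra|].
  assert (exA : forall u v, ex_RInt A u v) by (intros; apply (ex_RInt_continuous (V:=R_CompleteNormedModule)); intros; apply contA).
  assert (exB : forall u v, ex_RInt B u v) by (intros; apply (ex_RInt_continuous (V:=R_CompleteNormedModule)); intros; apply contB).
  rewrite <- (RInt_Chasles (V:=R_CompleteNormedModule) A 0 (a - 1) a) by auto.
  rewrite <- (RInt_Chasles (V:=R_CompleteNormedModule) B 0 (a - 1) a) by auto.
  unfold plus; simpl.
  apply Rplus_le_lt_compat.
  - apply RInt_le; auto; [lra|].
    intros z Hz. unfold A, B, c.
    assert (Hzk : 0 <= z ^ k) by (apply pow_le; lra).
    destruct (Rle_dec z (a - 2)) as [H|H].
    + assert ((x - a + 2) ^ m <= (x - z) ^ m) by (apply pow_incr; lra).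
      assert (0 <= z ^ k * (a - z) * (a - 2 - z)).
      { apply Rmult_le_pos; [apply Rmult_le_pos|]; lra. }
      nra.
    + assert ((x - z) ^ m <= (x - a + 2) ^ m) by (apply pow_incr; lra).
      assert (z ^ k * (a - z) * (a - 2 - z) <= 0).
      { assert (0 <= z ^ k * (a - z)) by (apply Rmult_le_pos; lra). nra. }
      nra.
  - apply RInt_lt; [lra| intros; apply contA | intros; apply contB |].
    intros z Hz. unfold A, B, c.
    assert (Hzk : 0 < z ^ k) by (apply pow_lt; lra).
    assert ((x - z) ^ m < (x - a + 2) ^ m).
    { apply pow_lt_strict; [lra|lra|lia]. }
    assert (z ^ k * (a - z) * (a - 2 - z) < 0).
    { assert (0 < z ^ k * (a - z)) by (apply Rmult_lt_0_compat; lra). nra. }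
    nra.
Qed.

Theorem lemma4p12 (n d : nat) (hd : (3 <= d)%nat) (hdn : (d <= n - 2)%nat) :
  Phi n d (2 * INR n - INR d + 2) > 2 * phi n d (2 * INR n - INR d + 2).
Proof.
  unfold Phi, phi.
  set (m := (n - d + 1)%nat).
  set (k := (d - 3)%nat).
  assert (E2 : (n - d + 2 = S m)%nat) by (unfold m; lia).
  rewrite E2.
  assert (Hd : INR d = INR k + 3).
  { replace d with (k + 3)%nat at 1 by (unfold k; lia). rewrite plus_INR. simpl. ring. }
  assert (Hx : 2 * INR n - INR d + 2 = INR d + 2 * INR m).
  { assert (INR n = INR (d + m - 1)) by (f_equal; unfold m; lia).
    rewrite H. rewrite minus_INR by lia. rewrite plus_INR. simpl. ring. }
  rewrite Hx.
  pose proof (main_ineq k m (INR d) (INR d + 2 * INR m) Hd eq_refl ltac:(unfold m; lia)) as M.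
  set (I1 := RInt (fun z => z ^ k * (INR d - z) * (INR d + 2 * INR m - z) ^ S m) 0 (INR d)) in *.
  set (I0 := RInt (fun z => z ^ k * (INR d - z) * (INR d + 2 * INR m - z) ^ m) 0 (INR d)) in *.
  rewrite fact_simpl, mult_INR, S_INR.
  assert (P1 : 0 < / 2 ^ m) by (apply Rinv_0_lt_compat, pow_lt; lra).
  assert (P2 : 0 < INR (fact n)) by (apply lt_0_INR, lt_O_fact).
  assert (P3 : 0 < INR (fact k)) by (apply lt_0_INR, lt_O_fact).
  assert (P4 : 0 < INR (fact m)) by (apply lt_0_INR, lt_O_fact).
  assert (P5 : 0 <= INR m) by apply pos_INR.
  apply Rminus_gt_0_lt in M.
  apply Rminus_gt.
  match goal with |- ?L - ?R > 0 =>
    replace (L - R) with (/ 2 ^ m * INR (fact n) / (INR (fact k) * ((INR m + 1) * INR (fact m)))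
                          * (I1 - 2 * (INR m + 1) * I0)) by (field; repeat split; try lra; apply pow_nonzero; lra) end.
  apply Rmult_lt_0_compat; [|lra].
  apply Rmult_lt_0_compat; [nra|].
  apply Rinv_0_lt_compat. apply Rmult_lt_0_compat; nra.
Qed.
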